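(* Let $\mathcal{H}=(C,F,D,G)$ be a hybrid system on $\mathcal{X}$ such that $F$ is outer semicontinuous, locally bounded, with nonempty convex values on $C$, and $G$ has nonempty values on $D$. Let $p$ be an atomic proposition such that $K:=\{x\in\mathcal{X}:p(x)=1\}$ is closed and $K\subset C\cup D$. Suppose there exist a continuously differentiable barrier function candidate $B:\mathcal{X}\to\mathbb{R}$ with respect to $K$ for $\mathcal{H}$ and an open neighborhood $U(\partial K)$ of $\partial K$ such that: (1) $\langle\nabla B(x),\eta\rangle\le0$ for all $x\in C\cap(U(\partial K)\setminus K)$ and all $\eta\in F(x)\cap T_C(x)$; (2) $B(\eta)\le0$ for all $x\in D\cap K$ and all $\eta\in G(x)$; (3) $G(D\cap K)\subset C\cup D$. Then for every solution $\phi$ to $\mathcal{H}$ with $\phi(0,0)\Vdash p$ and every $(t,j)\in\operatorname{dom}\phi$, $(\phi,(t,j))\models\Box p$.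
   Context: Hybrid systems. A hybrid system $\mathcal{H}=(C,F,D,G)$ on a state space $\mathcal{X}\subset\mathbb{R}^n$ is given by a flow set $C\subset\mathcal{X}$, a set-valued flow map $F:\mathcal{X}\rightrightarrows\mathcal{X}$, a jump set $D\subset\mathcal{X}$ and a set-valued jump map $G:\mathcal{X}\rightrightarrows\mathcal{X}$, and represents $\dot x\in F(x)$ for $x\in C$, $x^+\in G(x)$ for $x\in D$. Standing assumptions: $C\subset\operatorname{dom}F$, $D\subset\operatorname{dom}G$, $\overline{C}\cup D\cup G(D)\subset\mathcal{X}$ ($\overline C$ is the closure of $C$). A set $E\subset\mathbb{R}_{\ge0}\times\mathbb{N}$ is a hybrid time domain if for every $(T,J)\in E$ there are $0=t_0\le t_1\le\dots\le t_{J+1}$ with $E\cap([0,T]\times\{0,\dots,J\})=\bigcup_{j=0}^J([t_j,t_{j+1}]\times\{j\})$. A hybrid arc is a map $\phi:\operatorname{dom}\phi\to\mathbb{R}^n$ on a hybrid time domain such that for each $j$, $t\mapsto\phi(t,j)$ is locally absolutely continuous on $I^j=\{t:(t,j)\in\operatorname{dom}\phi\}$. A hybrid arc $\phi$ is a solution to $\mathcal{H}$ if (i) $\phi(0,0)\in\overline C\cup D$; (ii) for each $j$ such that $I^j$ has nonempty interior, $\phi(t,j)\in C$ for all $t\in\operatorname{int}I^j$ and $\dot\phi(t,j)\in F(\phi(t,j))$ for almost all $t\in I^j$; (iii) for each $(t,j)\in\operatorname{dom}\phi$ with $(t,j+1)\in\operatorname{dom}\phi$, $\phi(t,j)\in D$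 and $\phi(t,j+1)\in G(\phi(t,j))$. Temporal logic. An atomic proposition is a function $p:\mathcal{X}\to\{0,1\}$; write $\phi(t,j)\Vdash p$ if $p(\phi(t,j))=1$. $(\phi,(t,j))\models p$ iff $\phi(t,j)\Vdash p$; $(\phi,(t,j))\models\Box p$ iff $(\phi,(t',j'))\models p$ for all $(t',j')\in\operatorname{dom}\phi$ with $t'+j'\ge t+j$. The set $K$ is assumed nonempty. A function $B:\mathcal{X}\to\mathbb{R}$ is a barrier function candidate with respect to $K$ for $\mathcal{H}$ if $B(x)\le0$ for all $x\in K$ and $B(x)>0$ for all $x\in(C\cup D\cup G(D))\setminus K$. The tangent cone $T_C(x)$ of $C$ at $x$ is the set of $w$ for which there exist $x_i\in C$, $\tau_i>0$ with $x_i\to x$, $\tau_i\searrow0$ and $w=\lim_i (x_i-x)/\tau_i$. $\partial K$ is the boundary of $K$. *)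

(* Defs.v *)
From Stdlib Require Import Reals Lra List.
From Stdlib Require Vectors.Fin.
Open Scope R_scope.

Definition vec (n : nat) := Fin.t n -> R.

Fixpoint fsum (n : nat) : (Fin.t n -> R) -> R :=
  match n return (Fin.t n -> R) -> R with
  | O => fun _ => 0
  | S m => fun f => f Fin.F1 + fsum m (fun i => f (Fin.FS i))
  end.

Definition vadd {n} (u v : vec n) : vec n := fun i => u i + v i.
Definition vsub {n} (u v : vec n) : vec n := fun i => u i - v i.
Definition vscale {n} (a : R) (u : vec n) : vec n := fun i => a * u i.
Definition dot {n} (u v : vec n) : R := fsum n (fun i => u i * v i).
Definition vnorm {n} (u : vec n) : R := sqrt (dot u u).

(** subsets of R^n as predicates; set-valued maps as relations
    (M x y  means  y \in M(x)) *)
Definition vset n := vec n -> Prop.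
Definition setmap n := vec n -> vec n -> Prop.

Definition closure {n} (S : vset n) : vset n :=
  fun x => forall eps, 0 < eps -> exists y, S y /\ vnorm (vsub y x) < eps.
Definition is_closed {n} (S : vset n) : Prop := forall x, closure S x -> S x.
Definition is_open {n} (S : vset n) : Prop :=
  forall x, S x -> exists r, 0 < r /\ forall y, vnorm (vsub y x) < r -> S y.
Definition boundary {n} (S : vset n) : vset n :=
  fun x => closure S x /\ closure (fun y => ~ S y) x.

Definition vconv {n} (xs : nat -> vec n) (x : vec n) : Prop :=
  forall eps, 0 < eps -> exists N, forall i, (N <= i)%nat -> vnorm (vsub (xs i) x) < eps.

Definition tangent_cone {n} (C : vset n) (x : vec n) : vset n :=
  fun w => exists (xs : nat -> vec n) (taus : nat -> R),
    (forall i, C (xs i)) /\ vconv xs x /\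
    (forall i, 0 < taus i) /\ (forall i, taus (S i) <= taus i) /\ Un_cv taus 0 /\
    vconv (fun i => vscale (/ taus i) (vsub (xs i) x)) w.

Definition dom_map {n} (M : setmap n) : vset n := fun x => exists y, M x y.
Definition image {n} (M : setmap n) (S : vset n) : vset n :=
  fun y => exists x, S x /\ M x y.

Definition outer_semicontinuous {n} (X : vset n) (M : setmap n) : Prop :=
  forall (xs : nat -> vec n) (ys : nat -> vec n) x y,
    (forall i, X (xs i)) -> X x -> vconv xs x ->
    (forall i, M (xs i) (ys i)) -> vconv ys y -> M x y.

Definition locally_bounded {n} (X : vset n) (M : setmap n) : Prop :=
  forall x, X x -> exists r Mb, 0 < r /\
    forall z y, X z -> vnorm (vsub z x) < r -> M z y -> vnorm y <= Mb.

Definition convex_set {n} (S : vset n) : Prop :=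
  forall u v a, S u -> S v -> 0 <= a <= 1 ->
    S (vadd (vscale a u) (vscale (1 - a) v)).

Definition has_gradient {n} (B : vec n -> R) (x g : vec n) : Prop :=
  forall eps, 0 < eps -> exists delta, 0 < delta /\
    forall y, vnorm (vsub y x) < delta ->
      Rabs (B y - B x - dot g (vsub y x)) <= eps * vnorm (vsub y x).

Definition C1_on {n} (X : vset n) (B : vec n -> R) (gradB : vec n -> vec n) : Prop :=
  exists O : vset n, is_open O /\ (forall x, X x -> O x) /\
    (forall x, O x -> has_gradient B x (gradB x)) /\
    (forall x, O x -> forall eps, 0 < eps -> exists delta, 0 < delta /\
        forall y, O y -> vnorm (vsub y x) < delta -> vnorm (vsub (gradB y) (gradB x)) < eps).

Record hybrid_system (n : nat) := {
  hs_X : vset n; hs_C : vset n; hs_F : setmap n; hs_D : vset n; hs_G : setmap n }.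
Arguments hs_X {n}. Arguments hs_C {n}. Arguments hs_F {n}.
Arguments hs_D {n}. Arguments hs_G {n}.

Definition standing_assumptions {n} (H : hybrid_system n) : Prop :=
  (forall x y, hs_F H x y -> hs_X H x /\ hs_X H y) /\
  (forall x y, hs_G H x y -> hs_X H x /\ hs_X H y) /\
  (forall x, hs_C H x -> dom_map (hs_F H) x) /\
  (forall x, hs_D H x -> dom_map (hs_G H) x) /\
  (forall x, closure (hs_C H) x \/ hs_D H x \/ image (hs_G H) (hs_D H) x -> hs_X H x).

Definition hset := R -> nat -> Prop.

Definition hybrid_time_domain (E : hset) : Prop :=
  (forall t j, E t j -> 0 <= t) /\
  forall T J, E T J -> exists tt : nat -> R,
    tt O = 0 /\ (forall j, (j <= J)%nat -> tt j <= tt (S j)) /\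
    forall t j, (E t j /\ 0 <= t <= T /\ (j <= J)%nat) <->
                ((j <= J)%nat /\ tt j <= t <= tt (S j)).

Definition Ij (E : hset) (j : nat) : R -> Prop := fun t => E t j.

Fixpoint nonoverlapping_in (l : list (R * R)) (lo b : R) : Prop :=
  match l with
  | nil => True
  | (c, d) :: r => lo <= c /\ c <= d /\ d <= b /\ nonoverlapping_in r d b
  end.

Definition abs_continuous_on {n} (f : R -> vec n) (a b : R) : Prop :=
  forall eps, 0 < eps -> exists delta, 0 < delta /\
    forall l : list (R * R), nonoverlapping_in l a b ->
      fold_right (fun p s => (snd p - fst p) + s) 0 l < delta ->
      fold_right (fun p s => vnorm (vsub (f (snd p)) (f (fst p))) + s) 0 l < eps.

Definition loc_abs_continuous_on {n} (f : R -> vec n) (I : R -> Prop) : Prop :=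
  forall a b, a <= b -> (forall s, a <= s <= b -> I s) -> abs_continuous_on f a b.

Definition hybrid_arc {n} (E : hset) (phi : R -> nat -> vec n) : Prop :=
  hybrid_time_domain E /\ forall j, loc_abs_continuous_on (fun t => phi t j) (Ij E j).

Definition null_set (N : R -> Prop) : Prop :=
  forall eps, 0 < eps -> exists a b : nat -> R,
    (forall k, a k <= b k) /\ (forall x, N x -> exists k, a k <= x <= b k) /\
    (forall m, sum_f_R0 (fun k => b k - a k) m <= eps).

Definition has_vderiv_within {n} (I : R -> Prop) (f : R -> vec n) (t : R) (v : vec n) : Prop :=
  forall eps, 0 < eps -> exists delta, 0 < delta /\
    forall s, I s -> s <> t -> Rabs (s - t) < delta ->
      vnorm (vsub (vscale (/ (s - t)) (vsub (f s) (f t))) v) < eps.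

Definition interior_R (I : R -> Prop) : R -> Prop :=
  fun t => exists delta, 0 < delta /\ forall s, Rabs (s - t) < delta -> I s.

Definition is_solution {n} (H : hybrid_system n) (E : hset) (phi : R -> nat -> vec n) : Prop :=
  hybrid_arc E phi /\
  E 0 O /\
  (closure (hs_C H) (phi 0 O) \/ hs_D H (phi 0 O)) /\
  (forall j, (exists t, interior_R (Ij E j) t) ->
     (forall t, interior_R (Ij E j) t -> hs_C H (phi t j)) /\
     exists N, null_set N /\
       forall t, Ij E j t -> ~ N t ->
         exists v, has_vderiv_within (Ij E j) (fun s => phi s j) t v /\ hs_F H (phi t j) v) /\
  (forall t j, E t j -> E t (S j) ->
     hs_D H (phi t j) /\ hs_G H (phi t j) (phi t (S j))).

Definition models_always {n} (E : hset) (phi : R -> nat -> vec n) (p : vec n -> bool)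
  (t : R) (j : nat) : Prop :=
  forall t' j', E t' j' -> t' + INR j' >= t + INR j -> p (phi t' j') = true.

Definition barrier_candidate {n} (H : hybrid_system n) (K : vset n) (B : vec n -> R) : Prop :=
  (forall x, K x -> B x <= 0) /\
  (forall x, (hs_C H x \/ hs_D H x \/ image (hs_G H) (hs_D H) x) -> ~ K x -> B x > 0).

(* Main.v *)
Require Import Defs.
From Stdlib Require Import Reals Lra Psatz List FunctionalExtensionality Classical.
Open Scope R_scope.

Lemma fsum_ext n (f g : Fin.t n -> R) : (forall i, f i = g i) -> fsum n f = fsum n g.
Proof. induction n; simpl; intros; auto. rewrite H, (IHn (fun i => f (Fin.FS i)) (fun i => g (Fin.FS i))); auto. Qed.
Lemma fsum_add n (f g : Fin.t n -> R) : fsum n (fun i => f i + g i) = fsum n f + fsum n g.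
Proof. induction n; simpl; intros. lra. rewrite (IHn (fun i => f (Fin.FS i)) (fun i => g (Fin.FS i))); lra. Qed.
Lemma fsum_scale n c (f : Fin.t n -> R) : fsum n (fun i => c * f i) = c * fsum n f.
Proof. induction n; simpl; intros. lra. rewrite (IHn (fun i => f (Fin.FS i))); lra. Qed.
Lemma fsum_nonneg n (f : Fin.t n -> R) : (forall i, 0 <= f i) -> 0 <= fsum n f.
Proof. induction n; simpl; intros. lra. assert (0 <= fsum n (fun i => f (Fin.FS i))) by (apply IHn; auto). pose proof (H Fin.F1). lra. Qed.

Lemma dot_comm n (u v : vec n) : dot u v = dot v u.
Proof. unfold dot. apply fsum_ext. intros; ring. Qed.
Arguments dot_comm {n} u v.
Lemma dot_add_r n (u v w : vec n) : dot u (vadd v w) = dot u v + dot u w.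
Proof. unfold dot, vadd. rewrite <- fsum_add. apply fsum_ext. intros; ring. Qed.
Lemma dot_sub_r n (u v w : vec n) : dot u (vsub v w) = dot u v - dot u w.
Proof. unfold dot, vsub. replace (fsum n (fun i => u i * v i) - fsum n (fun i => u i * w i))
  with (fsum n (fun i => u i * v i) + (-1) * fsum n (fun i => u i * w i)) by ring.
 rewrite <- fsum_scale, <- fsum_add. apply fsum_ext. intros; ring. Qed.
Lemma dot_scale_r n (u v : vec n) c : dot u (vscale c v) = c * dot u v.
Proof. unfold dot, vscale. rewrite <- fsum_scale. apply fsum_ext. intros; ring. Qed.
Lemma dot_self_nonneg n (u : vec n) : 0 <= dot u u.
Proof. unfold dot. apply fsum_nonneg. intros; nra. Qed.

Lemma vext n (u v : vec n) : (forall i, u i = v i) -> u = v.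
Proof. intros; apply functional_extensionality; auto. Qed.

Lemma dot_sub_sub n (u v : vec n) (l : R) :
  dot (vsub u (vscale l v)) (vsub u (vscale l v)) = dot u u - 2 * l * dot u v + l * l * dot v v.
Proof. rewrite !dot_sub_r. rewrite !(dot_comm (vsub _ _)). rewrite !dot_sub_r, !dot_scale_r.
 rewrite !(dot_comm (vscale _ _)), !dot_scale_r. ring. Qed.

Lemma cauchy_schwarz n (u v : vec n) : dot u v * dot u v <= dot u u * dot v v.
Proof.
 pose proof (dot_self_nonneg n u). pose proof (dot_self_nonneg n v).
 destruct (Req_dec (dot v v) 0) as [E|E].
 - destruct (Req_dec (dot u v) 0) as [E2|E2]. rewrite E2, E; lra.
   pose proof (dot_self_nonneg n (vsub u (vscale ((dot u u + 1) / (2 * dot u v)) v))).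
   rewrite dot_sub_sub, E in H1. exfalso.
   replace (dot u u - 2 * ((dot u u + 1) / (2 * dot u v)) * dot u v +
       (dot u u + 1) / (2 * dot u v) * ((dot u u + 1) / (2 * dot u v)) * 0) with (-1) in H1 by (field; auto). lra.
 - pose proof (dot_self_nonneg n (vsub u (vscale (dot u v / dot v v) v))).
   rewrite dot_sub_sub in H1.
   replace (dot u u - 2 * (dot u v / dot v v) * dot u v + dot u v / dot v v * (dot u v / dot v v) * dot v v)
     with ((dot u u * dot v v - dot u v * dot u v) / dot v v) in H1 by (field; auto).
   assert (0 < dot v v) by lra.
   apply Rmult_le_compat_r with (r := dot v v) in H1; [|lra].
   unfold Rdiv in H1. rewrite Rmult_assoc, Rinv_l, Rmult_0_l in H1 by lra. lra.
Qed.

Lemma vnorm_nonneg n (u : vec n) : 0 <= vnorm u.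
Proof. apply sqrt_pos. Qed.
Lemma vnorm_sq n (u : vec n) : vnorm u * vnorm u = dot u u.
Proof. apply sqrt_sqrt, dot_self_nonneg. Qed.

Lemma dot_le n (u v : vec n) : Rabs (dot u v) <= vnorm u * vnorm v.
Proof.
 pose proof (cauchy_schwarz n u v). pose proof (vnorm_sq n u). pose proof (vnorm_sq n v).
 pose proof (vnorm_nonneg n u). pose proof (vnorm_nonneg n v).
 apply Rsqr_incr_0_var; [|nra]. unfold Rsqr. rewrite <- Rabs_mult, Rabs_right by nra. nra.
Qed.

Lemma vnorm_scale n c (u : vec n) : vnorm (vscale c u) = Rabs c * vnorm u.
Proof. unfold vnorm. rewrite dot_scale_r, (dot_comm (vscale _ _)), dot_scale_r, <- Rmult_assoc.
 rewrite sqrt_mult_alt by nra. f_equal. rewrite <- sqrt_Rsqr_abs. reflexivity. Qed.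

Lemma vnorm_triangle n (u v : vec n) : vnorm (vadd u v) <= vnorm u + vnorm v.
Proof.
 pose proof (dot_le n u v). pose proof (vnorm_sq n u). pose proof (vnorm_sq n v).
 pose proof (vnorm_nonneg n u). pose proof (vnorm_nonneg n v).
 assert (dot (vadd u v) (vadd u v) = dot u u + 2 * dot u v + dot v v).
 { rewrite !dot_add_r, !(dot_comm (vadd _ _)), !dot_add_r, (dot_comm v u). ring. }
 apply Rsqr_incr_0_var; [|nra]. unfold Rsqr. rewrite (vnorm_sq n (vadd u v)), H4.
 pose proof (Rle_abs (dot u v)). nra.
Qed.

Lemma vnorm_zero n : vnorm (fun _ : Fin.t n => 0) = 0.
Proof. unfold vnorm, dot. replace (fsum n _) with 0. apply sqrt_0. induction n; simpl; [reflexivity|]. rewrite <- IHn. ring. Qed.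

Lemma vsub_self n (x : vec n) : vnorm (vsub x x) = 0.
Proof. replace (vsub x x) with (fun _ : Fin.t n => 0). apply vnorm_zero. apply vext; intro; unfold vsub; ring. Qed.

Lemma vnorm_sub_sym n (x y : vec n) : vnorm (vsub x y) = vnorm (vsub y x).
Proof. replace (vsub x y) with (vscale (-1) (vsub y x)). rewrite vnorm_scale. replace (Rabs (-1)) with 1. ring. rewrite Rabs_left by lra; ring.
 apply vext; intro; unfold vscale, vsub; ring. Qed.

Lemma vnorm_sub_tri n (x y z : vec n) : vnorm (vsub x z) <= vnorm (vsub x y) + vnorm (vsub y z).
Proof. replace (vsub x z) with (vadd (vsub x y) (vsub y z)). apply vnorm_triangle.
 apply vext; intro; unfold vadd, vsub; ring. Qed.

Definition Dle (a b : R) (g : R -> R) (t : R) : Prop :=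
  forall eps, 0 < eps -> exists delta, 0 < delta /\ forall u, a <= u <= b -> Rabs (u - t) < delta ->
    (t < u -> g u - g t <= eps * (u - t)) /\ (u < t -> g t - g u <= eps * (t - u)).

Definition gsum (g : R -> R) (l : list ((R*R)*nat)) : R :=
  fold_right (fun x s => (g (snd (fst x)) - g (fst (fst x))) + s) 0 l.

Lemma no_ext l lo t t' : nonoverlapping_in l lo t -> t <= t' -> nonoverlapping_in l lo t'.
Proof. revert lo. induction l as [|[c d] r IH]; simpl; intros lo H1 H2; auto.
 destruct H1 as (?&?&?&?). repeat split; auto; lra. Qed.

Lemma no_app l lo t c d : nonoverlapping_in l lo t -> lo <= t -> t <= c -> c <= d ->
  nonoverlapping_in (l ++ (c,d)::nil) lo d.
Proof. revert lo. induction l as [|[c' d'] r IH]; simpl; intros lo H1 H0 H2 H3.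
 - repeat split; auto; lra.
 - destruct H1 as (?&?&?&?). repeat split; auto; try lra. Qed.

Lemma gsum_app g l x : gsum g (l ++ x :: nil) = gsum g l + (g (snd (fst x)) - g (fst (fst x))).
Proof. induction l; simpl; [ring|]. rewrite IHl. ring. Qed.

Lemma NoDup_snoc (l : list nat) k : NoDup l -> ~ In k l -> NoDup (l ++ k :: nil).
Proof. induction l; simpl; intros. constructor; [simpl; tauto|constructor].
 inversion H; subst. constructor.
 - intro Hi. apply in_app_or in Hi. destruct Hi as [Hi|Hi]; auto. simpl in Hi. destruct Hi; auto.
 - apply IHl; auto. Qed.

Definition Pinv a b g eps (lo hi : nat -> R) t : Prop :=
  a <= t <= b /\ exists l : list ((R*R)*nat),
   nonoverlapping_in (map fst l) a t /\ NoDup (map snd l) /\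
   (forall x, In x l -> lo (snd x) <= fst (fst x) /\ snd (fst x) <= hi (snd x)) /\
   (forall k, In k (map snd l) -> hi k <= t \/ t = b) /\
   g t <= g a + eps * (t - a) + gsum g l.

Lemma P_flat a b g eps lo hi u t' : 0 < eps -> Pinv a b g eps lo hi u -> u <= t' <= b ->
  g t' - g u <= eps * (t' - u) -> Pinv a b g eps lo hi t'.
Proof. intros He [Hu [l (H1&H2&H3&H4&H5)]] Ht Hg. split; [lra|]. exists l. split; [|split;[|split;[|split]]]; auto.
 - apply no_ext with u; auto; lra.
 - intros k Hk. destruct (H4 k Hk); [left; lra|]. right; lra.
 - nra. Qed.

Lemma P_jump a b g eps lo hi u k : 0 < eps -> Pinv a b g eps lo hi u -> u < b ->
  lo k < u < hi k -> Pinv a b g eps lo hi (Rmin (hi k) b).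
Proof. intros He [Hu [l (H1&H2&H3&H4&H5)]] Hub Hk.
 assert (Hfresh : ~ In k (map snd l)). { intro Hi. destruct (H4 k Hi); lra. }
 set (t' := Rmin (hi k) b).
 assert (Ht1 : u < t') by (unfold t'; apply Rmin_glb_lt; lra).
 assert (Ht2 : t' <= b) by apply Rmin_r. assert (Ht3 : t' <= hi k) by apply Rmin_l.
 split; [lra|]. exists (l ++ ((u,t'),k)::nil). rewrite !map_app. simpl. split; [|split;[|split;[|split]]].
 - apply no_app with u; auto; lra.
 - apply NoDup_snoc; auto.
 - intros x Hx. apply in_app_or in Hx. destruct Hx as [Hx|Hx]. apply H3; auto.
   simpl in Hx. destruct Hx as [Hx|[]]. subst x. simpl. lra.
 - intros k' Hk'. apply in_app_or in Hk'. destruct Hk' as [Hk'|Hk'].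
   destruct (H4 k' Hk'); [left; lra|right; lra].
   simpl in Hk'. destruct Hk' as [Hk'|[]]. subst k'. unfold t', Rmin.
   destruct (Rle_dec (hi k) b); [left; lra|right; lra].
 - rewrite gsum_app. simpl. nra.
Qed.

Lemma creep a b g (N : R -> Prop) : a <= b ->
  (forall eps, 0 < eps -> exists lo hi : nat -> R,
     (forall t, a <= t <= b -> N t -> exists k, lo k < t < hi k) /\
     (forall l, nonoverlapping_in (map fst l) a b -> NoDup (map snd l) ->
        (forall x, In x l -> lo (snd x) <= fst (fst x) /\ snd (fst x) <= hi (snd x)) ->
        gsum g l < eps)) ->
  (forall t, a <= t <= b -> ~ N t -> Dle a b g t) ->
  g b <= g a.
Proof.
 intros Hab Hcov HD.
 assert (Main : forall eps, 0 < eps -> g b <= g a + eps * (b - a + 1)).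
 { intros eps He. destruct (Hcov eps He) as (lo&hi&Hc&Hs).
   set (P := Pinv a b g eps lo hi).
   assert (Pa : P a). { split; [lra|]. exists nil. simpl. split; [|split;[|split;[|split]]].
     exact I. constructor. intros; contradiction. intros; contradiction. unfold gsum; simpl; lra. }
   assert (Hb : bound P). { exists b. intros t [Ht _]. lra. }
   destruct (completeness P Hb (ex_intro _ a Pa)) as [s [Hs1 Hs2]].
   assert (Has : a <= s) by (apply Hs1; auto).
   assert (Hsb : s <= b). { apply Hs2. intros t [Ht _]. lra. }
   assert (Appr : forall r, 0 < r -> exists u, P u /\ s - r < u <= s).
   { intros r Hr. apply NNPP. intro Hn. assert (s <= s - r); [|lra].
     apply Hs2. intros u Pu. destruct (Rle_dec u (s - r)) as [|Hnl]; auto.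
     exfalso; apply Hn. exists u. split; auto. split; [lra|]. apply Hs1; auto. }
   assert (Ps : P s).
   { destruct (classic (N s)) as [Ns|Ns].
     - destruct (Hc s (conj Has Hsb) Ns) as [k Hk].
       destruct (Appr (s - lo k)) as [u [Pu Hu]]; [lra|].
       destruct (Req_dec u b) as [Eub|Eub].
       + replace s with u by lra. auto.
       + assert (Hub : u < b) by (destruct Pu; lra).
         pose proof (P_jump a b g eps lo hi u k He Pu Hub ltac:(lra)) as Pt.
         assert (Hle : Rmin (hi k) b <= s) by (apply Hs1; auto).
         assert (s <= Rmin (hi k) b) by (apply Rmin_glb; lra).
         replace s with (Rmin (hi k) b) by lra. auto.
     - destruct (HD s (conj Has Hsb) Ns eps He) as [d [Hd Hd2]].
       destruct (Appr d Hd) as [u [Pu Hu]].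
       destruct (Req_dec u s) as [Eus|Eus]. subst; auto.
       assert (Hu0 : a <= u <= b) by (destruct Pu; lra).
       destruct (Hd2 u Hu0 ltac:(apply Rabs_def1; lra)) as [_ Hg].
       apply P_flat with u; auto; lra. }
   assert (Es : s = b).
   { destruct (Req_dec s b) as [|Hne]; auto. exfalso.
     destruct (classic (N s)) as [Ns|Ns].
     - destruct (Hc s (conj Has Hsb) Ns) as [k Hk].
       pose proof (P_jump a b g eps lo hi s k He Ps ltac:(lra) ltac:(lra)) as Pt.
       assert (Hle : Rmin (hi k) b <= s) by (apply Hs1; auto).
       assert (s < Rmin (hi k) b) by (apply Rmin_glb_lt; lra). lra.
     - destruct (HD s (conj Has Hsb) Ns eps He) as [d [Hd Hd2]].
       set (t' := Rmin (s + d/2) b).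
       assert (s < t') by (apply Rmin_glb_lt; lra).
       assert (t' <= s + d/2) by apply Rmin_l. assert (t' <= b) by apply Rmin_r.
       destruct (Hd2 t' ltac:(lra) ltac:(apply Rabs_def1; lra)) as [Hg _].
       assert (P t') by (apply P_flat with s; auto; lra).
       assert (t' <= s) by (apply Hs1; auto). lra. }
   subst s. destruct Ps as [_ [l (H1&H2&H3&H4&H5)]].
   pose proof (Hs l H1 H2 H3). nra. }
 destruct (Rle_dec (g b) (g a)) as [|Hn]; auto. exfalso.
 set (e := (g b - g a) / (2 * (b - a + 1))).
 assert (He : 0 < e) by (unfold e; apply Rdiv_lt_0_compat; lra).
 pose proof (Main e He). unfold e in H.
 replace ((g b - g a) / (2 * (b - a + 1)) * (b - a + 1)) with ((g b - g a)/2) in H by (field; lra). lra.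
Qed.

Fixpoint psum (f : nat -> R) (m : nat) : R :=
  match m with O => 0 | S m' => psum f m' + f m' end.

Lemma psum_sum f m : psum f (S m) = sum_f_R0 f m.
Proof. induction m; simpl in *. ring. rewrite IHm. ring. Qed.

Definition lsum (f : nat -> R) (ks : list nat) : R := fold_right (fun k s => f k + s) 0 ks.

Lemma lsum_nodup f : (forall k, 0 <= f k) -> forall m ks, NoDup ks -> (forall k, In k ks -> (k < m)%nat) ->
  lsum f ks <= psum f m.
Proof.
 intros Hf m. induction m; intros ks Hn Hk.
 - destruct ks as [|k ks]. simpl; lra. specialize (Hk k (or_introl eq_refl)). lia.
 - simpl. destruct (in_dec Nat.eq_dec m ks) as [Hi|Hi].
   + destruct (in_split _ _ Hi) as (l1&l2&E). subst ks.
     assert (lsum f (l1 ++ m :: l2) = f m + lsum f (l1 ++ l2)).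
     { clear. unfold lsum. induction l1; simpl. ring. rewrite IHl1. ring. }
     rewrite H. assert (lsum f (l1 ++ l2) <= psum f m); [|lra].
     apply IHm. apply NoDup_remove_1 with m; auto.
     intros k Hk'. pose proof (NoDup_remove_2 _ _ _ Hn).
     assert (k <> m) by (intro; subst; contradiction).
     assert (k < S m)%nat by (apply Hk; apply in_app_or in Hk'; apply in_or_app; simpl; tauto). lia.
   + assert (lsum f ks <= psum f m); [|pose proof (Hf m); lra].
     apply IHm; auto. intros k Hk'. assert (k <> m) by (intro; subst; contradiction).
     specialize (Hk k Hk'). lia.
Qed.

Lemma list_bound (ks : list nat) : exists m, forall k, In k ks -> (k < m)%nat.
Proof. induction ks as [|a ks [m Hm]]. exists O; simpl; tauto.
 exists (S (Nat.max a m)). intros k [E|Hk]. subst; lia. specialize (Hm k Hk); lia. Qed.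

Lemma gsum_map g (l : list ((R*R)*nat)) :
  gsum g l = fold_right (fun p s => (g (snd p) - g (fst p)) + s) 0 (map fst l).
Proof. induction l; simpl; auto. rewrite IHl. auto. Qed.

Lemma len_le lo hi (l : list ((R*R)*nat)) :
  (forall x, In x l -> lo (snd x) <= fst (fst x) /\ snd (fst x) <= hi (snd x)) ->
  fold_right (fun p s => (snd p - fst p) + s) 0 (map fst l) <= lsum (fun k => hi k - lo k) (map snd l).
Proof. induction l; simpl; intros H. lra.
 assert (H1 := H a (or_introl eq_refl)).
 assert (fold_right (fun p s => (snd p - fst p) + s) 0 (map fst l) <= lsum (fun k => hi k - lo k) (map snd l)) by (apply IHl; auto).
 lra. Qed.

Lemma geo_sum m : sum_f_R0 (fun k => (/2)^(S k)) m = 1 - (/2)^(S m).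
Proof. induction m. simpl. field. rewrite tech5, IHm. simpl. field. Qed.

Lemma pow_half_pos k : 0 < (/2)^k.
Proof. apply pow_lt; lra. Qed.

Lemma cov_from_null a b g (N : R -> Prop) : null_set N ->
  (forall eps, 0 < eps -> exists delta, 0 < delta /\ forall l, nonoverlapping_in l a b ->
      fold_right (fun p s => (snd p - fst p) + s) 0 l < delta ->
      fold_right (fun p s => (g (snd p) - g (fst p)) + s) 0 l < eps) ->
  forall eps, 0 < eps -> exists lo hi : nat -> R,
     (forall t, a <= t <= b -> N t -> exists k, lo k < t < hi k) /\
     (forall l, nonoverlapping_in (map fst l) a b -> NoDup (map snd l) ->
        (forall x, In x l -> lo (snd x) <= fst (fst x) /\ snd (fst x) <= hi (snd x)) ->
        gsum g l < eps).
Proof.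
 intros HN HAC eps He. destruct (HAC eps He) as [d [Hd Hl]].
 destruct (HN (d/4)) as (al & be & Hab & Hcov & Hsum); [lra|].
 set (rho := fun k => d / 8 * (/2)^(S k)).
 assert (Hrho : forall k, 0 < rho k) by (intro; unfold rho; pose proof (pow_half_pos (S k)); nra).
 exists (fun k => al k - rho k), (fun k => be k + rho k). split.
 - intros t Ht Nt. destruct (Hcov t Nt) as [k Hk]. exists k. specialize (Hrho k). lra.
 - intros l H1 H2 H3. rewrite gsum_map. apply Hl; auto.
   pose proof (len_le (fun k => al k - rho k) (fun k => be k + rho k) l H3) as L1.
   destruct (list_bound (map snd l)) as [m Hm].
   assert (L2 := lsum_nodup (fun k => be k + rho k - (al k - rho k))
      ltac:(intro k; simpl; specialize (Hab k); specialize (Hrho k); lra) m (map snd l) H2 Hm).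
   apply Rle_lt_trans with (1 := L1). apply Rle_lt_trans with (1 := L2). clear L1 L2.
   destruct m as [|m]. simpl; lra.
   rewrite psum_sum.
   rewrite (sum_eq _ (fun k => (be k - al k) + (/2)^(S k) * (d/4))).
   2:{ intros; unfold rho; field. }
   rewrite sum_plus, <- scal_sum, geo_sum. pose proof (Hsum m). pose proof (pow_half_pos (S m)). nra.
Qed.

Lemma gsum_zero g : forall l lo0 b, nonoverlapping_in (map fst l) lo0 b ->
  (forall x, In x l -> 0 <= fst (fst x) /\ snd (fst x) <= 0) -> gsum g l = 0.
Proof. induction l as [|[[c d] k] l IH]; simpl; intros lo0 b H1 H2; auto.
 destruct H1 as (?&?&?&?). destruct (H2 _ (or_introl eq_refl)) as [E1 E2]; simpl in *.
 rewrite (IH d b); auto. replace d with c by lra. ring. Qed.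

Lemma cov_empty a b g : forall eps, 0 < eps -> exists lo hi : nat -> R,
     (forall t, a <= t <= b -> (fun _ => False) t -> exists k, lo k < t < hi k) /\
     (forall l, nonoverlapping_in (map fst l) a b -> NoDup (map snd l) ->
        (forall x, In x l -> lo (snd x) <= fst (fst x) /\ snd (fst x) <= hi (snd x)) ->
        gsum g l < eps).
Proof. intros eps He. exists (fun _ => 0), (fun _ => 0). split. intros; contradiction.
 intros l H1 _ H. rewrite (gsum_zero g l a b); auto. Qed.

Lemma D_of_lin a b g t c : c <= 0 ->
  (forall eps, 0 < eps -> exists delta, 0 < delta /\ forall u, a <= u <= b -> Rabs (u - t) < delta ->
     Rabs (g u - g t - (u - t) * c) <= eps * Rabs (u - t)) -> Dle a b g t.
Proof. intros Hc H eps He. destruct (H eps He) as [d [Hd H2]]. exists d. split; auto.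
 intros u Hu Hut. specialize (H2 u Hu Hut). split; intros Hlt.
 - rewrite (Rabs_right (u - t)) in H2 by lra. pose proof (Rle_abs (g u - g t - (u - t) * c)). pose proof (Rle_abs (-(g u - g t - (u - t) * c))). rewrite Rabs_Ropp in H1. nra.
 - rewrite (Rabs_left (u - t)) in H2 by lra. pose proof (Rle_abs (g u - g t - (u - t) * c)). pose proof (Rle_abs (-(g u - g t - (u - t) * c))). rewrite Rabs_Ropp in H1. nra.
Qed.

Lemma mvt_le a b g : a <= b -> (forall t, a <= t <= b -> Dle a b g t) -> g b <= g a.
Proof. intros Hab HD. apply (creep a b g (fun _ => False)); auto. apply cov_empty. Qed.

Lemma deriv_bound n (I : R -> Prop) (psi : R -> vec n) t v : has_vderiv_within I psi t v ->
  forall eps, 0 < eps -> exists delta, 0 < delta /\ forall s, I s -> Rabs (s - t) < delta ->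
   vnorm (vsub (vsub (psi s) (psi t)) (vscale (s - t) v)) <= eps * Rabs (s - t).
Proof. intros H eps He. destruct (H eps He) as [d [Hd H2]]. exists d; split; auto.
 intros s Is Hst. destruct (Req_dec s t) as [E|E].
 - subst. replace (vsub (vsub (psi t) (psi t)) (vscale (t - t) v)) with (fun _ : Fin.t n => 0).
   rewrite vnorm_zero. rewrite Rminus_diag, Rabs_R0. lra.
   apply vext; intro; unfold vsub, vscale; ring.
 - replace (vsub (vsub (psi s) (psi t)) (vscale (s - t) v)) with
     (vscale (s - t) (vsub (vscale (/ (s - t)) (vsub (psi s) (psi t))) v)).
   rewrite vnorm_scale. specialize (H2 s Is E Hst). pose proof (Rabs_pos (s - t)). nra.
   apply vext; intro; unfold vsub, vscale. field. lra.
Qed.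

Lemma vnorm_sub_bound n (x y : vec n) : vnorm x <= vnorm (vsub x y) + vnorm y.
Proof. replace x with (vadd (vsub x y) y) at 1. apply vnorm_triangle. apply vext; intro; unfold vadd, vsub; ring. Qed.

Lemma chain n (B : vec n -> R) (G : vec n) (I : R -> Prop) (psi : R -> vec n) t v :
  has_gradient B (psi t) G -> has_vderiv_within I psi t v ->
  forall eps, 0 < eps -> exists delta, 0 < delta /\ forall u, I u -> Rabs (u - t) < delta ->
   Rabs (B (psi u) - B (psi t) - (u - t) * dot G v) <= eps * Rabs (u - t).
Proof.
 intros HG Hv eps He. set (nv := vnorm v). set (nG := vnorm G).
 assert (Hnv : 0 <= nv) by apply vnorm_nonneg. assert (HnG : 0 <= nG) by apply vnorm_nonneg.
 set (e1 := eps / (2 * (nv + 1))).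
 assert (He1 : 0 < e1) by (unfold e1; apply Rdiv_lt_0_compat; lra).
 set (e2 := Rmin 1 (eps / (2 * (nG + 1)))).
 assert (He2 : 0 < e2) by (unfold e2; apply Rmin_glb_lt; [lra|apply Rdiv_lt_0_compat; lra]).
 assert (He2a : e2 <= 1) by apply Rmin_l.
 assert (He2b : e2 <= eps / (2 * (nG + 1))) by apply Rmin_r.
 destruct (HG e1 He1) as [d1 [Hd1 H1]].
 destruct (deriv_bound n I psi t v Hv e2 He2) as [d2 [Hd2 H2]].
 exists (Rmin d2 (d1 / (nv + 1))). split.
 { apply Rmin_glb_lt; auto. apply Rdiv_lt_0_compat; lra. }
 intros u Iu Hu.
 assert (Hu2 : Rabs (u - t) < d2) by (eapply Rlt_le_trans; [apply Hu|apply Rmin_l]).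
 assert (Hu1 : Rabs (u - t) < d1 / (nv + 1)) by (eapply Rlt_le_trans; [apply Hu|apply Rmin_r]).
 set (w := vsub (vsub (psi u) (psi t)) (vscale (u - t) v)).
 assert (Hw : vnorm w <= e2 * Rabs (u - t)) by (apply H2; auto).
 assert (Hdp : vnorm (vsub (psi u) (psi t)) <= (nv + 1) * Rabs (u - t)).
 { replace (vsub (psi u) (psi t)) with (vadd w (vscale (u - t) v)).
   eapply Rle_trans. apply vnorm_triangle. rewrite vnorm_scale. fold nv.
   pose proof (Rabs_pos (u - t)). nra.
   apply vext; intro; unfold w, vadd, vsub, vscale; ring. }
 assert (Hsmall : vnorm (vsub (psi u) (psi t)) < d1).
 { pose proof (Rabs_pos (u - t)).
   apply Rle_lt_trans with ((nv + 1) * Rabs (u - t)); auto.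
   apply Rmult_lt_reg_r with (/ (nv + 1)). apply Rinv_0_lt_compat; lra.
   replace ((nv + 1) * Rabs (u - t) * / (nv + 1)) with (Rabs (u - t)) by (field; lra). auto. }
 specialize (H1 (psi u) Hsmall).
 assert (Edot : dot G (vsub (psi u) (psi t)) = (u - t) * dot G v + dot G w).
 { unfold w. rewrite !dot_sub_r, dot_scale_r. ring. }
 pose proof (dot_le n G w). fold nG in H.
 replace (B (psi u) - B (psi t) - (u - t) * dot G v) with
   ((B (psi u) - B (psi t) - dot G (vsub (psi u) (psi t))) + dot G w) by (rewrite Edot; ring).
 eapply Rle_trans. apply Rabs_triang.
 pose proof (Rabs_pos (u - t)). pose proof (vnorm_nonneg n w).
 assert (nG * vnorm w <= eps / 2 * Rabs (u - t)).
 { apply Rle_trans with (nG * (e2 * Rabs (u - t))). apply Rmult_le_compat_l; auto.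
   apply Rle_trans with (nG * (eps / (2 * (nG + 1)) * Rabs (u - t))).
   apply Rmult_le_compat_l; auto. apply Rmult_le_compat_r; auto.
   replace (nG * (eps / (2 * (nG + 1)) * Rabs (u - t))) with ((nG / (nG + 1)) * (eps / 2 * Rabs (u - t))) by (field; lra).
   assert (nG / (nG + 1) <= 1). { apply Rmult_le_reg_r with (nG + 1). lra. unfold Rdiv. rewrite Rmult_assoc, Rinv_l by lra. lra. }
   pose proof (Rmult_le_compat_r (eps / 2 * Rabs (u - t)) _ _ ltac:(nra) H4). lra. }
 assert (e1 * vnorm (vsub (psi u) (psi t)) <= eps / 2 * Rabs (u - t)).
 { apply Rle_trans with (e1 * ((nv + 1) * Rabs (u - t))). apply Rmult_le_compat_l; lra.
   unfold e1. right. field. lra. }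
 lra.
Qed.

Lemma lip_ball n (B : vec n -> R) (gradB : vec n -> vec n) x0 r L :
  (forall y, vnorm (vsub y x0) < r -> has_gradient B y (gradB y) /\ vnorm (gradB y) <= L) ->
  forall y z, vnorm (vsub y x0) < r -> vnorm (vsub z x0) < r -> B z - B y <= L * vnorm (vsub z y).
Proof.
 intros HB y z Hy Hz. set (w := vsub z y). set (nw := vnorm w).
 assert (Hnw : 0 <= nw) by apply vnorm_nonneg.
 set (p := fun l => vadd y (vscale l w)).
 set (h := fun l => B (p l) - L * l * nw).
 assert (Hp : forall l, 0 <= l <= 1 -> vnorm (vsub (p l) x0) < r).
 { intros l Hl. replace (vsub (p l) x0) with (vadd (vscale (1 - l) (vsub y x0)) (vscale l (vsub z x0))).
   eapply Rle_lt_trans. apply vnorm_triangle. rewrite !vnorm_scale, !Rabs_right by lra.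
   destruct (Req_dec l 0). subst; lra. assert (0 < l) by lra. nra.
   apply vext; intro; unfold p, w, vadd, vscale, vsub; ring. }
 assert (Hh : h 1 <= h 0).
 { apply mvt_le; [lra|]. intros t Ht. destruct (HB (p t) (Hp t Ht)) as [Hg HL].
   apply D_of_lin with (dot (gradB (p t)) w - L * nw).
   - pose proof (dot_le n (gradB (p t)) w). pose proof (Rle_abs (dot (gradB (p t)) w)).
     fold nw in H. pose proof (vnorm_nonneg n (gradB (p t))). nra.
   - intros eps He. destruct (Hg (eps / (nw + 1))) as [d [Hd H1]].
     { apply Rdiv_lt_0_compat; lra. }
     exists (d / (nw + 1)). split. apply Rdiv_lt_0_compat; lra.
     intros u Hu Hut.
     assert (E : vsub (p u) (p t) = vscale (u - t) w) by (apply vext; intro; unfold p, vsub, vadd, vscale; ring).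
     assert (Hs : vnorm (vsub (p u) (p t)) < d).
     { rewrite E, vnorm_scale. fold nw. pose proof (Rabs_pos (u - t)).
       apply Rle_lt_trans with (Rabs (u - t) * (nw + 1)). nra.
       apply Rmult_lt_reg_r with (/ (nw + 1)). apply Rinv_0_lt_compat; lra.
       replace (Rabs (u - t) * (nw + 1) * / (nw + 1)) with (Rabs (u - t)) by (field; lra). exact Hut. }
     specialize (H1 (p u) Hs). rewrite E, dot_scale_r, vnorm_scale in H1. fold nw in H1.
     unfold h. replace (B (p u) - L * u * nw - (B (p t) - L * t * nw) - (u - t) * (dot (gradB (p t)) w - L * nw))
       with (B (p u) - B (p t) - (u - t) * dot (gradB (p t)) w) by ring.
     eapply Rle_trans. apply H1. pose proof (Rabs_pos (u - t)).
     replace (eps / (nw + 1) * (Rabs (u - t) * nw)) with (eps * Rabs (u - t) * (nw / (nw + 1))) by (field; lra).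
     assert (Q1 : nw / (nw + 1) <= 1). { apply Rmult_le_reg_r with (nw + 1). lra. unfold Rdiv. rewrite Rmult_assoc, Rinv_l by lra. lra. }
     assert (Q2 : 0 <= eps * Rabs (u - t)) by nra.
     pose proof (Rmult_le_compat_l (eps * Rabs (u - t)) _ _ Q2 Q1). lra. }
 unfold h in Hh. replace (p 1) with z in Hh. replace (p 0) with y in Hh. lra.
 apply vext; intro; unfold p, w, vadd, vscale, vsub; ring.
 apply vext; intro; unfold p, w, vadd, vscale, vsub; ring.
Qed.

Lemma small_seq h0 d : 0 < h0 -> 0 < d -> exists N, forall i, (N <= i)%nat -> h0 / (INR i + 1) < d.
Proof. intros H0 Hd. destruct (archimed_cor1 (d / h0)) as [N [HN1 HN2]]. apply Rdiv_lt_0_compat; auto.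
 exists N. intros i Hi. apply le_INR in Hi. assert (0 < INR N) by (apply lt_0_INR; auto).
 apply Rmult_lt_reg_r with (/ h0). apply Rinv_0_lt_compat; auto.
 replace (h0 / (INR i + 1) * / h0) with (/ (INR i + 1)) by (field; lra).
 apply Rle_lt_trans with (/ INR N). apply Rinv_le_contravar; lra. unfold Rdiv in HN1. auto. Qed.

Lemma tcone n (C : vset n) (I : R -> Prop) (psi : R -> vec n) a b t v :
  a < t < b -> (forall s, a < s < b -> C (psi s)) -> (forall s, a <= s <= b -> I s) ->
  has_vderiv_within I psi t v -> tangent_cone C (psi t) v.
Proof.
 intros Ht HC HI Hv. set (h0 := (b - t) / 2).
 assert (Hh0 : 0 < h0) by (unfold h0; lra).
 set (tau := fun i : nat => h0 / (INR i + 1)).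
 assert (Htp : forall i, 0 < tau i) by (intro i; unfold tau; pose proof (pos_INR i); apply Rdiv_lt_0_compat; lra).
 assert (Htl : forall i, tau i <= h0).
 { intro i. unfold tau. pose proof (pos_INR i). apply Rmult_le_reg_r with (INR i + 1). lra.
   unfold Rdiv. rewrite Rmult_assoc, Rinv_l by lra. nra. }
 exists (fun i => psi (t + tau i)), tau. split; [|split; [|split; [|split; [|split]]]].
 - intro i. apply HC. specialize (Htp i); specialize (Htl i). unfold h0 in Htl. lra.
 - intros eps He. destruct (deriv_bound n I psi t v Hv 1 ltac:(lra)) as [d [Hd H]].
   set (nv := vnorm v). assert (0 <= nv) by apply vnorm_nonneg.
   destruct (small_seq h0 (Rmin d (eps / (nv + 2))) Hh0) as [N HN].
   { apply Rmin_glb_lt; auto. apply Rdiv_lt_0_compat; lra. }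
   exists N. intros i Hi. specialize (HN i Hi). fold (tau i) in HN.
   assert (tau i < d) by (eapply Rlt_le_trans; [apply HN|apply Rmin_l]).
   assert (tau i < eps / (nv + 2)) by (eapply Rlt_le_trans; [apply HN|apply Rmin_r]).
   specialize (Htp i). specialize (Htl i).
   assert (Hs : I (t + tau i)) by (apply HI; unfold h0 in Htl; lra).
   specialize (H (t + tau i) Hs). replace (t + tau i - t) with (tau i) in H by ring.
   rewrite Rabs_right in H by lra. specialize (H H1).
   apply Rle_lt_trans with (vnorm (vsub (vsub (psi (t + tau i)) (psi t)) (vscale (tau i) v)) + vnorm (vscale (tau i) v)).
   replace (vsub (psi (t + tau i)) (psi t)) with (vadd (vsub (vsub (psi (t + tau i)) (psi t)) (vscale (tau i) v)) (vscale (tau i) v)) at 1.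
   apply vnorm_triangle. apply vext; intro; unfold vadd, vsub, vscale; ring.
   rewrite vnorm_scale, Rabs_right by lra. fold nv.
   apply Rmult_lt_compat_r with (r := nv + 2) in H2; [|lra].
   replace (eps / (nv + 2) * (nv + 2)) with eps in H2 by (field; lra). nra.
 - exact Htp.
 - intro i. unfold tau. pose proof (pos_INR i). rewrite S_INR.
   apply Rmult_le_compat_l. lra. apply Rinv_le_contravar; lra.
 - intros eps He. destruct (small_seq h0 eps Hh0 He) as [N HN]. exists N. intros i Hi.
   unfold R_dist. rewrite Rminus_0_r, Rabs_right by (specialize (Htp i); lra). apply HN; auto.
 - intros eps He. destruct (Hv eps He) as [d [Hd H]].
   destruct (small_seq h0 d Hh0 Hd) as [N HN]. exists N. intros i Hi.
   specialize (Htp i). specialize (Htl i).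
   assert (Hs : I (t + tau i)) by (apply HI; unfold h0 in Htl; lra).
   specialize (H (t + tau i) Hs ltac:(lra)). replace (t + tau i - t) with (tau i) in H by ring.
   apply H. rewrite Rabs_right by lra. apply HN; auto.
Qed.

Lemma ac_cont n (psi : R -> vec n) a b : abs_continuous_on psi a b ->
  forall t, a <= t <= b -> forall eps, 0 < eps -> exists delta, 0 < delta /\
   forall u, a <= u <= b -> Rabs (u - t) < delta -> vnorm (vsub (psi u) (psi t)) < eps.
Proof. intros H t Ht eps He. destruct (H eps He) as [d [Hd H2]]. exists d; split; auto.
 intros u Hu Hut. destruct (Rle_dec t u).
 - specialize (H2 ((t,u)::nil)). simpl in H2. rewrite Rabs_right in Hut by lra.
   assert (vnorm (vsub (psi u) (psi t)) + 0 < eps) by (apply H2; [repeat split; lra|lra]). lra.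
 - specialize (H2 ((u,t)::nil)). simpl in H2. rewrite Rabs_left in Hut by lra.
   assert (vnorm (vsub (psi t) (psi u)) + 0 < eps) by (apply H2; [repeat split; lra|lra]).
   rewrite vnorm_sub_sym. lra.
Qed.

Lemma lub_approx (S : R -> Prop) s : is_lub S s -> forall r, 0 < r -> exists u, S u /\ s - r < u <= s.
Proof. intros [Hs1 Hs2] r Hr. apply NNPP. intro Hn. assert (s <= s - r); [|lra].
 apply Hs2. intros u Su. destruct (Rle_dec u (s - r)) as [|Hnl]; auto.
 exfalso; apply Hn. exists u. split; auto. split; [lra|]. apply Hs1; auto. Qed.

Lemma no_sum_le n (g : R -> R) (psi : R -> vec n) L lo0 hi :
  (forall c d, lo0 <= c -> c <= d -> d <= hi -> g d - g c <= L * vnorm (vsub (psi d) (psi c))) ->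
  forall l lo, lo0 <= lo -> nonoverlapping_in l lo hi ->
  fold_right (fun p s => (g (snd p) - g (fst p)) + s) 0 l <=
  L * fold_right (fun p s => vnorm (vsub (psi (snd p)) (psi (fst p))) + s) 0 l.
Proof. intros Hg l. induction l as [|[c d] l IH]; simpl; intros lo Hlo Hn. lra.
 destruct Hn as (?&?&?&?). specialize (Hg c d ltac:(lra) H0 H1). specialize (IH d ltac:(lra) H2). lra. Qed.

Lemma flow_K n (H : hybrid_system n) (K : vset n) (B : vec n -> R) gradB (U : vset n)
  (I : R -> Prop) (psi : R -> vec n) (N : R -> Prop) a0 b0 :
  a0 < b0 ->
  (forall s, a0 <= s <= b0 -> I s) ->
  loc_abs_continuous_on psi I ->
  (forall s, a0 < s < b0 -> hs_C H (psi s)) ->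
  null_set N ->
  (forall t, I t -> ~ N t -> exists v, has_vderiv_within I psi t v /\ hs_F H (psi t) v) ->
  (forall x, K x -> hs_X H x) ->
  is_closed K ->
  C1_on (hs_X H) B gradB ->
  barrier_candidate H K B ->
  is_open U -> (forall x, boundary K x -> U x) ->
  (forall x eta, hs_C H x -> U x -> ~ K x ->
     hs_F H x eta -> tangent_cone (hs_C H) x eta -> dot (gradB x) eta <= 0) ->
  K (psi a0) -> K (psi b0).
Proof.
 intros Hab HI HAC HC HN Hder HKX HKc HC1 [Hb1 Hb2] HU HbU Hc1 Ka.
 assert (AC0 : abs_continuous_on psi a0 b0) by (apply HAC; auto; lra).
 pose proof (ac_cont n psi a0 b0 AC0) as Cont.
 apply NNPP. intro Kb.
 set (S := fun t => a0 <= t <= b0 /\ K (psi t)).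
 assert (Hbd : bound S) by (exists b0; intros t [Ht _]; lra).
 assert (Sa : S a0) by (split; [lra|auto]).
 destruct (completeness S Hbd (ex_intro _ a0 Sa)) as [s Hs].
 pose proof (lub_approx S s Hs) as Appr.
 assert (Has : a0 <= s) by (apply (proj1 Hs); auto).
 assert (Hsb : s <= b0) by (apply (proj2 Hs); intros t [Ht _]; lra).
 set (x0 := psi s).
 assert (Kx0 : K x0).
 { apply HKc. intros eps He. destruct (Cont s (conj Has Hsb) eps He) as [d [Hd Hc]].
   destruct (Appr d Hd) as [u [[Hu Ku] Hu2]]. exists (psi u). split; auto.
   apply Hc; auto. apply Rabs_def1; lra. }
 assert (Hsb' : s < b0). { destruct (Req_dec s b0); [|lra]. subst s. contradiction. }
 assert (After : forall t, s < t <= b0 -> ~ K (psi t)).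
 { intros t Ht Kt. assert (t <= s) by (apply (proj1 Hs); split; [lra|auto]). lra. }
 assert (Ux0 : U x0).
 { apply HbU. split.
   - intros eps He. exists x0. split; auto. rewrite vsub_self; auto.
   - intros eps He. destruct (Cont s (conj Has Hsb) eps He) as [d [Hd Hc]].
     set (t := Rmin (s + d/2) b0).
     assert (s < t) by (apply Rmin_glb_lt; lra). assert (t <= s + d/2) by apply Rmin_l.
     assert (t <= b0) by apply Rmin_r.
     exists (psi t). split. apply After; lra. apply Hc. lra. apply Rabs_def1; lra. }
 destruct (HU x0 Ux0) as [rU [HrU HUb]].
 destruct HC1 as (O & HO & HXO & Hgr & Hgc).
 assert (Ox0 : O x0) by (apply HXO, HKX; auto).
 destruct (HO x0 Ox0) as [rO [HrO HOb]].
 destruct (Hgc x0 Ox0 1 ltac:(lra)) as [dg [Hdg Hgcb]].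
 set (r := Rmin rU (Rmin rO dg)).
 assert (Hr : 0 < r) by (unfold r; repeat apply Rmin_glb_lt; auto).
 assert (Hr1 : r <= rU) by apply Rmin_l.
 assert (Hr2 : r <= rO) by (eapply Rle_trans; [apply Rmin_r|apply Rmin_l]).
 assert (Hr3 : r <= dg) by (eapply Rle_trans; [apply Rmin_r|apply Rmin_r]).
 set (L := vnorm (gradB x0) + 1).
 assert (HL : 0 < L) by (unfold L; pose proof (vnorm_nonneg n (gradB x0)); lra).
 assert (Ball : forall y, vnorm (vsub y x0) < r -> U y /\ O y /\ has_gradient B y (gradB y) /\ vnorm (gradB y) <= L).
 { intros y Hy. assert (Oy : O y) by (apply HOb; lra). split; [apply HUb; lra|]. split; auto. split; auto.
   pose proof (Hgcb y Oy ltac:(lra)). pose proof (vnorm_sub_bound n (gradB y) (gradB x0)). unfold L. lra. }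
 assert (Lip : forall y z, vnorm (vsub y x0) < r -> vnorm (vsub z x0) < r -> B z - B y <= L * vnorm (vsub z y)).
 { apply lip_ball with gradB. intros y Hy. destruct (Ball y Hy) as (_&_&?&?). auto. }
 destruct (Cont s (conj Has Hsb) r Hr) as [dc [Hdc Hcc]].
 set (t1 := Rmin (s + dc/2) ((s + b0)/2)).
 assert (Ht1a : s < t1) by (apply Rmin_glb_lt; lra).
 assert (Ht1b : t1 <= s + dc/2) by apply Rmin_l. assert (Ht1c : t1 <= (s + b0)/2) by apply Rmin_r.
 assert (Bt1 : B (psi t1) > 0).
 { apply Hb2. left. apply HC; lra. apply After; lra. }
 assert (Bx0 : B x0 <= 0) by auto.
 destruct (Cont s (conj Has Hsb) (B (psi t1) / (2 * L))) as [d2 [Hd2 Hc2]].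
 { apply Rdiv_lt_0_compat; lra. }
 set (a' := s + Rmin d2 (t1 - s) / 2).
 assert (Hm1 : 0 < Rmin d2 (t1 - s)) by (apply Rmin_glb_lt; lra).
 assert (Hm2 : Rmin d2 (t1 - s) <= d2) by apply Rmin_l.
 assert (Hm3 : Rmin d2 (t1 - s) <= t1 - s) by apply Rmin_r.
 assert (Ha'1 : s < a') by (unfold a'; lra). assert (Ha'2 : a' < t1) by (unfold a'; lra).
 assert (InB : forall u, s <= u <= t1 -> vnorm (vsub (psi u) x0) < r).
 { intros u Hu. apply Hcc. lra. apply Rabs_def1; lra. }
 assert (Ba' : B (psi a') < B (psi t1)).
 { assert (Hx : vnorm (vsub (psi a') x0) < B (psi t1) / (2 * L)) by (apply Hc2; [lra|apply Rabs_def1; unfold a'; lra]).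
   pose proof (Lip x0 (psi a') ltac:(rewrite vsub_self; lra) ltac:(apply InB; lra)).
   apply Rmult_lt_compat_l with (r := L) in Hx; [|lra].
   replace (L * (B (psi t1) / (2 * L))) with (B (psi t1) / 2) in Hx by (field; lra). fold x0 in H0. lra. }
 assert (Cr : B (psi t1) <= B (psi a')).
 { apply (creep a' t1 (fun u => B (psi u)) N); [lra| |].
   - apply cov_from_null; auto.
     intros eps He. assert (ACs : abs_continuous_on psi a' t1) by (apply HAC; [lra|intros; apply HI; lra]).
     destruct (ACs (eps / (L + 1))) as [d [Hd Hl]]. apply Rdiv_lt_0_compat; lra.
     exists d. split; auto. intros l Hn Hlen. specialize (Hl l Hn Hlen).
     eapply Rle_lt_trans. apply (no_sum_le n (fun u => B (psi u)) psi L a' t1) with (lo := a'); auto; [|lra].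
     intros c d0 Hc Hcd Hd0. apply Lip; apply InB; lra.
     assert (0 <= fold_right (fun p s => vnorm (vsub (psi (snd p)) (psi (fst p))) + s) 0 l).
     { clear. induction l; simpl. lra. pose proof (vnorm_nonneg n (vsub (psi (snd a)) (psi (fst a)))). lra. }
     apply Rmult_lt_compat_l with (r := L) in Hl; auto.
     apply Rlt_le_trans with (L * (eps / (L + 1))); auto.
     replace (L * (eps / (L + 1))) with (eps * (L / (L + 1))) by (field; lra).
     assert (L / (L + 1) <= 1). { apply Rmult_le_reg_r with (L + 1). lra. unfold Rdiv. rewrite Rmult_assoc, Rinv_l by lra. lra. }
     nra.
   - intros t Ht Nt. assert (It : I t) by (apply HI; lra).
     destruct (Hder t It Nt) as [v [Hv Fv]].
     assert (Ct : hs_C H (psi t)) by (apply HC; lra).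
     destruct (Ball (psi t) (InB t ltac:(lra))) as (Ut & _ & Hgt & _).
     assert (Tc : tangent_cone (hs_C H) (psi t) v) by (apply tcone with I a0 b0; auto; lra).
     assert (Hc : dot (gradB (psi t)) v <= 0) by (apply Hc1; auto; apply After; lra).
     apply D_of_lin with (dot (gradB (psi t)) v); auto.
     intros eps He. destruct (chain n B (gradB (psi t)) I psi t v Hgt Hv eps He) as [d [Hd Hch]].
     exists d. split; auto. intros u Hu Hut. apply Hch; auto. apply HI; lra. }
 lra.
Qed.

Theorem theorem1 (n : nat) (H : hybrid_system n) (p : vec n -> bool)
  (B : vec n -> R) (gradB : vec n -> vec n) (U : vset n) :
  standing_assumptions H ->
  outer_semicontinuous (hs_X H) (hs_F H) ->
  locally_bounded (hs_X H) (hs_F H) ->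
  (forall x, hs_C H x -> (exists v, hs_F H x v) /\ convex_set (hs_F H x)) ->
  (forall x, hs_D H x -> exists v, hs_G H x v) ->
  let K : vset n := fun x => hs_X H x /\ p x = true in
  (exists x, K x) ->
  is_closed K ->
  (forall x, K x -> hs_C H x \/ hs_D H x) ->
  C1_on (hs_X H) B gradB ->
  barrier_candidate H K B ->
  is_open U -> (forall x, boundary K x -> U x) ->
  (forall x eta, hs_C H x -> U x -> ~ K x ->
     hs_F H x eta -> tangent_cone (hs_C H) x eta -> dot (gradB x) eta <= 0) ->
  (forall x eta, hs_D H x -> K x -> hs_G H x eta -> B eta <= 0) ->
  (forall x eta, hs_D H x -> K x -> hs_G H x eta -> hs_C H eta \/ hs_D H eta) ->
  forall (E : hset) (phi : R -> nat -> vec n),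
    is_solution H E phi -> p (phi 0 O) = true ->
    forall t j, E t j -> models_always E phi p t j.
Proof.
 intros Hsa _ _ _ _ K _ Kcl _ HC1 Hbar HU HUb Hc1 Hc2 Hc3 E phi Hsol Hp0 t0 j0 _.
 destruct Hsa as (HFX & HGX & HCdom & HDdom & Hclos).
 destruct Hsol as ((Htd & Hlac) & E00 & Hinit & Hflow & Hjump).
 destruct Htd as [Hnn Hstruct].
 assert (Struct : forall j t, E t j -> exists a, a <= t /\ (forall s, a <= s <= t -> E s j) /\
    (j = O -> a = 0) /\ (forall j', j = S j' -> E a j')).
 { intros j t Ht. destruct (Hstruct t j Ht) as [tt (Htt0 & Hmono & Heq)].
   destruct (proj1 (Heq t j) (conj Ht (conj (conj (Hnn t j Ht) (Rle_refl t)) (Nat.le_refl _)))) as [_ [Ht1 Ht2]].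
   exists (tt j). split; [lra|]. split; [|split].
   - intros s Hs; apply (proj2 (Heq s j)); split; [apply Nat.le_refl|lra].
   - intros ->. auto.
   - intros j' ->. apply (proj2 (Heq (tt (S j')) j')). split. lia. split; [|lra]. apply Hmono. lia. }
 assert (Flow : forall j a t, a <= t -> (forall s, a <= s <= t -> E s j) -> K (phi a j) -> K (phi t j)).
 { intros j a t Hat Mem Ka.
   destruct (Req_dec a t) as [Eq|Ne]; [rewrite <- Eq; auto|].
   assert (Hlt : a < t) by lra.
   assert (Hint : exists s, interior_R (Ij E j) s).
   { exists ((a + t)/2); exists ((t - a)/2); split; [lra|].
     intros u Hu; apply Rabs_def2 in Hu; apply Mem; lra. }
   destruct (Hflow j Hint) as [Cint [N [HN Hder]]].
   assert (Imem : forall s, a <= s <= t -> Ij E j s) by (intros s Hs; apply Mem; auto).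
   assert (Cin : forall s, a < s < t -> hs_C H (phi s j)).
   { intros s Hs; apply Cint; exists (Rmin (s - a) (t - s)); split.
     apply Rmin_glb_lt; lra.
     intros u Hu; apply Rabs_def2 in Hu; apply Mem.
     pose proof (Rmin_l (s - a) (t - s)); pose proof (Rmin_r (s - a) (t - s)); lra. }
   assert (KX : forall x, K x -> hs_X H x) by (intros x [Hx _]; auto).
   apply (flow_K n H K B gradB U (Ij E j) (fun s => phi s j) N a t); auto. }
 assert (Key : forall j t, E t j -> K (phi t j)).
 { induction j as [|j IH]; intros t Ht; destruct (Struct _ _ Ht) as (a & Hat & Mem & H0 & HS);
   apply (Flow _ a t Hat Mem).
   - rewrite (H0 eq_refl). split; auto. apply Hclos. destruct Hinit; auto.
   - assert (Ej : E a j) by (apply HS; auto).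
     destruct (Hjump _ _ Ej (Mem a ltac:(lra))) as [HD HG].
     pose proof (IH _ Ej) as Kj.
     apply NNPP. intro nK. pose proof (Hc2 _ _ HD Kj HG).
     assert (B (phi a (S j)) > 0); [|lra].
     apply (proj2 Hbar). destruct (Hc3 _ _ HD Kj HG); auto. auto. }
 intros t' j' Ht' _. apply (Key j' t' Ht').
Qed.
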